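(* Let $G$ be a graph, $\varphi$ a $4$-colouring of $G$, and $v$ a vertex of $G$ of degree $3$ that is $\varphi$-frozen. Then every neighbour of $v$ is $\varphi$-frozen.
   Context: Colourings are proper $4$-colourings (colours $\{1,2,3,4\}$); a recolouring sequence is a sequence of proper $4$-colourings in which consecutive ones differ on exactly one vertex. A vertex $v$ is $\varphi$-frozen if $\gamma(v)=\varphi(v)$ for every $4$-colouring $\gamma$ obtainable from $\varphi$ by a recolouring sequence. *)

(* Defs.v *)
From mathcomp Require Import all_boot.
Set Implicit Arguments. Unset Strict Implicit. Unset Printing Implicit Defensive.

(* A finite simple graph: vertex type T (finType), adjacency e : rel T,
   symmetric and irreflexive.  Colours {1,2,3,4} are encoded as 'I_4. *)

Definition colouring (T : finType) := {ffun T -> 'I_4}.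

Definition proper_col (T : finType) (e : rel T) (c : colouring T) : bool :=
  [forall x, forall y, e x y ==> (c x != c y)].

Definition recolour_step (T : finType) (e : rel T) : rel (colouring T) :=
  fun a b => [&& proper_col e a, proper_col e b & #|[set x | a x != b x]| == 1].

Definition reachable (T : finType) (e : rel T) (phi gamma : colouring T) : Prop :=
  exists s : seq (colouring T), path (recolour_step e) phi s /\ last phi s = gamma.

Definition frozen (T : finType) (e : rel T) (phi : colouring T) (v : T) : Prop :=
  forall gamma, reachable e phi gamma -> gamma v = phi v.

Definition degree (T : finType) (e : rel T) (v : T) : nat := #|[set u | e v u]|.

(* Main.v *)
Require Import Defs.
From mathcomp Require Import all_boot.

Lemma reach_proper (T : finType) (e : rel T) (phi g : colouring T) :
  proper_col e phi -> reachable e phi g -> proper_col e g.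
Proof.
move=> pp [s [hp <-]]; elim/last_ind: s hp => [|s g' _] //=.
by rewrite rcons_path last_rcons => /andP [_ /and3P [_ ? _]].
Qed.

Lemma reach_rcons (T : finType) (e : rel T) (phi g g' : colouring T) :
  reachable e phi g -> recolour_step e g g' -> reachable e phi g'.
Proof.
move=> [s [hp hl]] hs; exists (rcons s g'); split; last by rewrite last_rcons.
by rewrite rcons_path hp hl.
Qed.

Lemma reach0 (T : finType) (e : rel T) (phi : colouring T) : reachable e phi phi.
Proof. by exists [::]. Qed.

Lemma cover (T : finType) (e : rel T) (e_sym : symmetric e) (e_irr : irreflexive e)
  (phi : colouring T) (phi_proper : proper_col e phi) (v : T)
  (frozen_v : frozen e phi v) (g : colouring T) (hg : reachable e phi g) (c : 'I_4) :
  exists2 x, (x == v) || e v x & g x = c.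
Proof.
case: (boolP [exists x, ((x == v) || e v x) && (g x == c)]) =>
  [/existsP [x /andP [hx /eqP hgx]]|hne]; first by exists x.
exfalso.
have hn : forall x, (x == v) || e v x -> g x != c.
  move=> x hx; apply/negP => /eqP hgx; move/negP: hne; apply; apply/existsP.
  by exists x; rewrite hx hgx eqxx.
have gp : proper_col e g := @reach_proper T e phi g phi_proper hg.
pose g2 : colouring T := [ffun x => if x == v then c else g x].
have hcv : c != g v by rewrite eq_sym; apply: hn; rewrite eqxx.
have step : recolour_step e g g2.
  apply/and3P; split => //.
    apply/forallP => x; apply/forallP => y; apply/implyP => exy; rewrite !ffunE.
    move/forallP: gp => /(_ x)/forallP/(_ y)/implyP/(_ exy) gxy.
    have [hx|hxv] := eqVneq x v; have [hy|hyv] := eqVneq y v.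
    - by subst; rewrite e_irr in exy.
    - by subst x; rewrite eq_sym; apply: hn; rewrite exy orbT.
    - by subst y; apply: hn; rewrite e_sym in exy; rewrite exy orbT.
    - exact gxy.
  apply/eqP; have -> : [set x | g x != g2 x] = [set v]; last by rewrite cards1.
  apply/setP => x; rewrite !inE ffunE.
  by have [->|hxv] := eqVneq x v; [rewrite eq_sym hcv | rewrite eqxx].
have r2 : reachable e phi g2 := @reach_rcons T e phi g g2 hg step.
have := frozen_v _ r2; rewrite ffunE eqxx -(frozen_v _ hg) => hc.
by rewrite hc eqxx in hcv.
Qed.

Theorem lemma7 (T : finType) (e : rel T) (e_sym : symmetric e) (e_irr : irreflexive e)
  (phi : colouring T) (phi_proper : proper_col e phi) (v : T)
  (deg_v : degree e v = 3) (frozen_v : frozen e phi v) :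
  forall u : T, e v u -> frozen e phi u.
Proof.
pose N := [set z | (z == v) || e v z].
have cN : #|N| = 4.
  have -> : N = v |: [set z | e v z] by apply/setP => z; rewrite !inE.
  by rewrite cardsU1 inE e_irr; move: deg_v; rewrite /degree => ->.
have iN : {in N &, injective phi}.
  apply/imset_injP; rewrite cN.
  have -> : phi @: N = setT.
    apply/setP => c; rewrite inE.
    have [z hz <-] := @cover T e e_sym e_irr phi phi_proper v frozen_v _ (@reach0 T e phi) c.
    by apply: imset_f; rewrite inE.
  by rewrite cardsT card_ord.
move=> u evu gamma [s [hp hl]]; subst gamma.
suff: forall x, e v x -> last phi s x = phi x by apply.
elim/last_ind: s hp => [|s g IH] hp x hx //=.
rewrite rcons_path in hp; case/andP: hp => hp hst; rewrite last_rcons.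
have IH' := IH hp.
have rg : reachable e phi (last phi s) by exists s.
have rg' : reachable e phi g := @reach_rcons T e phi _ g rg hst.
apply/eqP; apply/negPn/negP => hne.
have hdiff : forall y, y != x -> g y = last phi s y.
  move=> y hyx; apply/eqP; rewrite eq_sym; apply/negPn/negP => hy.
  case/and3P: hst => _ _ /cards1P [z hz].
  have : x \in [set y | last phi s y != g y] by rewrite inE IH' // eq_sym.
  have : y \in [set y | last phi s y != g y] by rewrite inE.
  by rewrite hz !inE => /eqP hy1 /eqP hx1; rewrite hy1 hx1 eqxx in hyx.
have [y hyN hgy] := @cover T e e_sym e_irr phi phi_proper v frozen_v _ rg' (phi x).
have [hyx|hyx] := eqVneq y x; first by subst y; rewrite hgy eqxx in hne.
have hpy : phi y = phi x.
  case/orP: hyN => [/eqP hyv|hvy].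
    by subst y; rewrite -(frozen_v _ rg').
  by rewrite -IH' // -hdiff.
have := iN _ _ _ _ hpy; rewrite !inE hx orbT => /(_ hyN isT) hxy.
by rewrite hxy eqxx in hyx.
Qed.
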